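(* For every $n\ge 1$, $2w_n\in C(2q_n)$ and $2r_n\in C(2q_n)$, where $w_n=x_1\cdots x_n(x_1^2+1)$, $q_n=x_1^3x_2\cdots x_n$ and $r_n=x_1\cdots x_n$.
   Context: All operations are on $\mathbb{Z}_8$. For an operation $f$, $C(f)$ denotes the clone generated by $f$ together with binary addition and all unary constant operations. *)

(* Defs.v *)
From mathcomp Require Import all_boot all_algebra.
Unset Printing Implicit Defensive.
Import GRing.Theory.
Local Open Scope ring_scope.

Definition Z8 := 'Z_8.
Definition op (k : nat) := ('I_k -> Z8) -> Z8.

(* C(f): the clone generated by f, binary addition and all unary constants. *)
Inductive inC (m : nat) (f : op m) : forall k : nat, op k -> Prop :=
  | inC_proj : forall k (i : 'I_k), @inC m f k (fun x => x i)
  | inC_gen : @inC m f m f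
  | inC_add : @inC m f 2 (fun x => x ord0 + x (lift ord0 ord0))
  | inC_const : forall c : Z8, @inC m f 1 (fun _ => c)
  | inC_comp : forall l k (g : op l) (hs : 'I_l -> op k),
      @inC m f l g -> (forall i, @inC m f k (hs i)) ->
      @inC m f k (fun x => g (fun i => hs i x))
  | inC_ext : forall k (g h : op k), @inC m f k g -> (forall x, g x = h x) ->
      @inC m f k h.

Definition C (m : nat) (f : op m) : forall k, op k -> Prop := @inC m f.

(* r_n = x_1 ... x_n, w_n = x_1...x_n (x_1^2+1), q_n = x_1^3 x_2 ... x_n;
   here n.+1-ary, x_1 = x ord0. *)
Definition r_op (n : nat) : op n.+1 := fun x => \prod_(i < n.+1) x i.
Definition w_op (n : nat) : op n.+1 :=
  fun x => (\prod_(i < n.+1) x i) * (x ord0 ^+ 2 + 1).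
Definition q_op (n : nat) : op n.+1 :=
  fun x => x ord0 ^+ 3 * \prod_(i < n) x (lift ord0 i).

Definition times2 k (f : op k) : op k := fun x => 2 * f x.
Arguments C {m} f {k} g.
Arguments times2 {k} f x.

(* Main.v *)
Require Import Defs.
From mathcomp Require Import all_boot all_algebra.
From mathcomp Require Import ring.
Import GRing.Theory.
Local Open Scope ring_scope.

Lemma C_proj m (f : op m) k (i : 'I_k) : C f (fun x : 'I_k -> Z8 => x i).
Proof. exact: (@inC_proj m f k i). Qed.

Lemma C_add m (f : op m) k (g h : op k) :
  C f g -> C f h -> C f (fun x => g x + h x).
Proof.
move=> Hg Hh.
pose hs := fun i : 'I_2 => if i == ord0 then g else h.
apply: (@inC_ext m f k (fun x => (fun i => hs i x) ord0 + (fun i => hs i x) (lift ord0 ord0))).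
  apply: (@inC_comp m f 2 k _ hs (@inC_add m f)).
  by move=> i; rewrite /hs; case: ifP.
by move=> x; rewrite /hs.
Qed.

Lemma C_cst m (f : op m) k (c : Z8) : C f (fun x : 'I_k.+1 -> Z8 => c).
Proof.
exact: (@inC_comp m f 1 k.+1 (fun _ => c) (fun _ x => x ord0) (@inC_const m f c)
          (fun _ => @inC_proj m f k.+1 ord0)).
Qed.

Lemma C_muln m (f : op m) k (h : op k.+1) j :
  C f h -> C f (fun x => h x *+ j).
Proof.
move=> Hh; elim: j => [|j IH].
  apply: (@inC_ext m f k.+1 (fun _ => 0)); first exact: C_cst.
  by move=> x; rewrite mulr0n.
apply: (@inC_ext m f k.+1 (fun x => h x + h x *+ j)); first exact: C_add.
by move=> x; rewrite mulrS.
Qed.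

Lemma C_gen m (f : op m) k (hs : 'I_m -> op k) :
  (forall i, C f (hs i)) -> C f (fun x => f (fun i => hs i x)).
Proof. by move=> H; apply: (@inC_comp m f m k f hs (@inC_gen m f)). Qed.

Lemma id2 (a b : Z8) :
  2 * a * b = 2 * (b ^+ 3 * (a + 1)) + 2 * (a ^+ 3 * (a + b + 1))
               + 7 * (2 * ((a + b) ^+ 3 * (a + 1))).
Proof.
case: a => [[|[|[|[|[|[|[|[|a]]]]]]]] Ha] //;
case: b => [[|[|[|[|[|[|[|[|b]]]]]]]] Hb] //; apply/eqP; vm_compute; reflexivity.
Qed.

Lemma id3 (a b : Z8) :
  2 * a * b * (a ^+ 2 + 1) = 2 * (1 ^+ 3 * a) + 7 * (2 * ((b + 1) ^+ 3 * (a + b)))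
               + 7 * (2 * ((a + b + 1) ^+ 3 * b)).
Proof.
case: a => [[|[|[|[|[|[|[|[|a]]]]]]]] Ha] //;
case: b => [[|[|[|[|[|[|[|[|b]]]]]]]] Hb] //; apply/eqP; vm_compute; reflexivity.
Qed.

Definition hsel k (X Y : op k.+2) (i : 'I_k.+2) : op k.+2 :=
  if i == ord0 then X else if i == lift ord0 ord0 then Y else fun x => x i.

Arguments hsel {k} X Y i.

Definition Tm k (X Y : op k.+2) : op k.+2 :=
  fun x => times2 (q_op k.+1) (fun i => hsel X Y i x).

Arguments Tm {k} X Y x.

Definition Rp k (x : 'I_k.+2 -> Z8) : Z8 :=
  \prod_(i < k) x (lift ord0 (lift ord0 i)).

Arguments Rp {k} x.

Lemma Tm_val k (X Y : op k.+2) x :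
  Tm X Y x = 2 * (X x ^+ 3 * (Y x * Rp x)).
Proof.
rewrite /Tm /times2 /q_op /Rp big_ord_recl /hsel /=.
congr (2 * (_ * (_ * _))).
Qed.

Lemma Tm_C k (X Y : op k.+2) :
  C (times2 (q_op k.+1)) X -> C (times2 (q_op k.+1)) Y ->
  C (times2 (q_op k.+1)) (Tm X Y).
Proof.
move=> HX HY; apply: C_gen => i; rewrite /hsel.
case: ifP => _ //; case: ifP => _ //; exact: C_proj.
Qed.

Lemma prod_split k (x : 'I_k.+2 -> Z8) :
  \prod_(i < k.+2) x i = x ord0 * (x (lift ord0 ord0) * Rp x).
Proof. by rewrite big_ord_recl big_ord_recl. Qed.

Lemma alg_w (Z : comNzRingType) (u v R : Z) :
 2 * (1 ^+ 3 * (u * R)) + 2 * ((v + 1) ^+ 3 * ((u + v) * R)) *+ 7 +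
  2 * ((u + v + 1) ^+ 3 * (v * R)) *+ 7 = (2 * (1 ^+ 3 * u) + 7 * (2 * ((v + 1) ^+ 3 * (u + v)))
               + 7 * (2 * ((u + v + 1) ^+ 3 * v))) * R.
Proof. ring. Qed.

Lemma alg_w2 (Z : comNzRingType) (u v R : Z) :
  2 * (u * (v * R) * (u ^+ 2 + 1)) = (2 * u * v * (u ^+ 2 + 1)) * R.
Proof. ring. Qed.

Lemma alg_r (Z : comNzRingType) (u v R : Z) :
  2 * (v ^+ 3 * ((u + 1) * R)) + 2 * (u ^+ 3 * ((u + v + 1) * R))
  + 2 * ((u + v) ^+ 3 * ((u + 1) * R)) *+ 7
  = (2 * (v ^+ 3 * (u + 1)) + 2 * (u ^+ 3 * (u + v + 1))
               + 7 * (2 * ((u + v) ^+ 3 * (u + 1)))) * R.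
Proof. ring. Qed.

Lemma alg_r2 (Z : comNzRingType) (u v R : Z) :
  2 * (u * (v * R)) = (2 * u * v) * R.
Proof. ring. Qed.

Theorem lemma4p6 (n : nat) :
  C (times2 (q_op n)) (times2 (w_op n)) /\ C (times2 (q_op n)) (times2 (r_op n)).
Proof.
case: n => [|k].
  split.
    apply: (@inC_ext _ _ 1 (fun x => times2 (q_op 0) x + (x ord0 + x ord0))).
      apply: C_add; first exact: (@inC_gen _ _).
      by apply: C_add; apply: C_proj.
    move=> x; rewrite /times2 /q_op /w_op !big_ord1 big_ord0; ring.
  apply: (@inC_ext _ _ 1 (fun x => x ord0 + x ord0)).
    by apply: C_add; apply: C_proj.
  move=> x; rewrite /times2 /r_op !big_ord1; ring.
set f := times2 (q_op k.+1).
pose a : op k.+2 := fun x => x ord0.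
pose b : op k.+2 := fun x => x (lift ord0 ord0).
have Ca : C f a by exact: C_proj.
have Cb : C f b by exact: C_proj.
have Cc : forall c : Z8, C f (fun _ : 'I_k.+2 -> Z8 => c) by move=> c; exact: C_cst.
split.
  apply: (@inC_ext _ _ k.+2 (fun x => Tm (fun _ => 1) a x
      + Tm (fun x => b x + 1) (fun x => a x + b x) x *+ 7
      + Tm (fun x => a x + b x + 1) b x *+ 7)).
    apply: C_add; first apply: C_add.
    - by apply: Tm_C.
    - by apply: C_muln; apply: Tm_C; apply: C_add.
    - by apply: C_muln; apply: Tm_C => //; apply: C_add => //; apply: C_add.
  move=> x; rewrite !Tm_val /times2 /w_op prod_split /a /b.
  move: (x ord0) (x (lift ord0 ord0)) (Rp x) => u v R.
  by rewrite alg_w alg_w2 id3.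
apply: (@inC_ext _ _ k.+2 (fun x => Tm b (fun x => a x + 1) x
    + Tm a (fun x => a x + b x + 1) x
    + Tm (fun x => a x + b x) (fun x => a x + 1) x *+ 7)).
  apply: C_add; first apply: C_add.
  - by apply: Tm_C => //; apply: C_add.
  - by apply: Tm_C => //; apply: C_add => //; apply: C_add.
  - by apply: C_muln; apply: Tm_C; apply: C_add.
move=> x; rewrite !Tm_val /times2 /r_op prod_split /a /b.
move: (x ord0) (x (lift ord0 ord0)) (Rp x) => u v R.
by rewrite alg_r alg_r2 id2.
Qed.
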